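(* Let $\mu>0$, let $V^{*}_{\mu}$ be the fixed point of $\mathcal{B}_{\mu}$, $Q^{*}_{\mu}(s,a)=\mathbb{E}_{S'\sim\mathbf{P}(\cdot\mid s,a)}[R(S',s,a)+\gamma V^{*}_{\mu}(S')]$, and let the induced (maximizing) policy $\pi^{*}_{\mu}$ satisfy $\pi^{*}_{\mu}(a\mid s)\le\mathbf{C}$. Let $\mathcal{W}_{s}=\{a:\mathbf{C}>\pi^{*}_{\mu}(a\mid s)>0\}$ and suppose $\{a:\pi^{*}_{\mu}(a\mid s)=\mathbf{C}\}$ has Lebesgue measure $0$. Then $$\mathcal{B}_{\mu}V^{*}_{\mu}(s)=\mu-\frac{1}{4\mu}\left(\frac{\big(\int_{\mathcal{W}_s}Q^{*}_{\mu}(s,a')\,da'-2\mu\big)^2}{\sigma(\mathcal{W}_s)}-\int_{\mathcal{W}_s}Q^{*}_{\mu}(s,a)^2\,da\right).$$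
   Context: Markov decision process with state space $\mathcal{S}$, action space $\mathcal{A}\subseteq\mathbb{R}$ ($\sigma$ = Lebesgue measure), transition kernel $\mathbf{P}$, bounded reward $R(s',s,a)$, discount $\gamma\in[0,1)$. $\Pi_{\mathbf{C}}$ is the class of conditional densities on $\mathcal{A}$ bounded by $\mathbf{C}$. For bounded $V$, $Q_V(s,a)=\mathbb{E}_{S'\sim\mathbf{P}(\cdot\mid s,a)}[R(S',s,a)+\gamma V(S')]$ and $\mathcal{B}_{\mu}V(s)=\sup_{\pi\in\Pi_{\mathbf{C}}}\int_{\mathcal{A}}[Q_V(s,a)\pi(a\mid s)+\mu(\pi(a\mid s)-\pi(a\mid s)^2)]\,da$; the induced policy $\pi^{*}_{\mu}(\cdot\mid s)$ is the density attaining this supremum for $V=V^{*}_{\mu}$. *)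

(* Defs.v *)
From HB Require Import structures.
From mathcomp Require Import all_boot all_order all_algebra.
From mathcomp Require Import all_classical all_reals all_analysis.
Set Implicit Arguments. Unset Strict Implicit. Unset Printing Implicit Defensive.
Import Order.TTheory GRing.Theory Num.Theory.
Import numFieldNormedType.Exports.
Local Open Scope classical_set_scope.
Local Open Scope ring_scope.

Definition Qfun {d} {S : measurableType d} {R : realType}
  (P : R.-pker (S * R)%type ~> S) (Rew : S -> S -> R -> R) (gamma : R)
  (V : S -> R) (s : S) (a : R) : R :=
  Rintegral (P (s, a)) setT (fun s' => Rew s' s a + gamma * V s').

Definition density_on {R : realType} (A : set R) (C : R) (p : R -> R) : Prop :=
  [/\ measurable_fun A p,
      (forall a, A a -> 0 <= p a <= C) &
      (\int[@lebesgue_measure R]_(a in A) (p a)%:E = 1)%E].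

Definition PiC {d} {S : measurableType d} {R : realType} (A : set R) (C : R)
  : set (S -> R -> R) :=
  [set pi | measurable_fun (setT `*` A) (fun x : S * R => pi x.1 x.2) /\
            forall s, density_on A C (pi s)].

Definition objective {d} {S : measurableType d} {R : realType}
  (P : R.-pker (S * R)%type ~> S) (Rew : S -> S -> R -> R) (gamma mu : R)
  (A : set R) (V : S -> R) (s : S) (p : R -> R) : R :=
  Rintegral (@lebesgue_measure R) A
    (fun a => Qfun P Rew gamma V s a * p a + mu * (p a - p a ^+ 2)).

Definition Bmu {d} {S : measurableType d} {R : realType}
  (P : R.-pker (S * R)%type ~> S) (Rew : S -> S -> R -> R) (gamma mu : R)
  (A : set R) (C : R) (V : S -> R) (s : S) : R :=
  sup [set objective P Rew gamma mu A V s (pi s) | pi in PiC A C].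

(* Main.v *)
Require Import Defs.
From HB Require Import structures.
From mathcomp Require Import all_boot all_order all_algebra.
From mathcomp Require Import all_classical all_reals all_analysis.
From mathcomp Require Import ring lra measurable_realfun.
Import Order.TTheory GRing.Theory Num.Theory.
Import numFieldNormedType.Exports.
Local Open Scope classical_set_scope.
Local Open Scope ring_scope.

Set Implicit Arguments. Unset Strict Implicit. Unset Printing Implicit Defensive.


Lemma bnd_of (T : Type) (R : realType) (A : set T) (f : T -> R) (M : R) :
  (forall x, A x -> `|f x| <= M) -> [bounded f x | x in A].
Proof.
move=> h; rewrite /bounded_near; near=> M' => x Ax /=.
apply: (le_trans (h x Ax)).
near: M'; exact/nbhs_pinfty_ge/num_real.
Unshelve. all: end_near. Qed.

Lemma Q_props {d} {S : measurableType d} {R : realType}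
  (P : R.-pker (S * R)%type ~> S) (Rew : S -> S -> R -> R) (gamma : R)
  (V : S -> R) (s : S) :
  measurable_fun setT (fun x : S * (S * R) => Rew x.1 x.2.1 x.2.2) ->
  (exists M : R, forall s' s0 a, `|Rew s' s0 a| <= M) ->
  0 <= gamma < 1 ->
  measurable_fun setT V ->
  (exists M : R, forall s0, `|V s0| <= M) ->
  measurable_fun setT (Qfun P Rew gamma V s) /\
  exists M : R, forall a, `|Qfun P Rew gamma V s a| <= M.
Proof.
move=> mRew [MR hR] /andP[g0 g1] mV [MV hV].
set M0 := MR + gamma * MV.
pose g (x : (S * R) * S) := Rew x.2 x.1.1 x.1.2 + gamma * V x.2.
have hg x : `|g x| <= M0.
  rewrite /g /M0; apply: (le_trans (ler_normD _ _)); apply: lerD => //.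
  by rewrite normrM ger0_norm// ler_wpM2l.
have mg : measurable_fun setT g.
  apply: measurable_funD.
    have -> : (fun x : (S * R) * S => Rew x.2 x.1.1 x.1.2) =
       (fun x : S * (S * R) => Rew x.1 x.2.1 x.2.2) \o (@unstable.swap _ _) by [].
    by apply: measurableT_comp mRew _; exact: measurable_swap.
  apply: measurable_funM => //; exact: measurableT_comp mV measurable_snd.
have intg x : (P x).-integrable setT (EFin \o (fun y => g (x, y))).
  apply: measurable_bounded_integrable => //.
    by rewrite prob_kernel ltry.
    exact: measurableT_comp mg (pair1_measurable x).
  by apply: (@bnd_of _ _ _ _ (M0)) => y _; exact: hg.
have key x : (\int[P x]_(y in setT) (g (x, y))%:E)%E =
   (\int[P x]_(y in setT) g (x, y))%:E.
  by rewrite /Rintegral fineK// integrable_fin_num.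
have icst x : (P x).-integrable setT (EFin \o (fun=> M0)).
  apply: measurable_bounded_integrable => //; first by rewrite prob_kernel ltry.
  by apply: (@bnd_of _ _ _ _ (`|M0|)) => y _.
have bnd x : `|\int[P x]_(y in setT) g (x, y)| <= M0.
  apply: (le_trans (le_normr_Rintegral _ (intg x))) => //.
  have -> : M0 = \int[P x]_(y in setT) M0 by rewrite Rintegral_cst// prob_kernel/= mulr1.
  apply: le_Rintegral => //; try exact: integrable_norm.
  all: try (by move=> y _; exact: hg).
split; last by exists M0 => a; exact: bnd.
have Me x : \int[P x]_(y in setT) g (x, y) =
  fine (\int[P x]_(y in setT) (g (x, y) + M0)%:E)%E - M0.
  rewrite [fine _](_ : _ = \int[P x]_(y in setT) (g (x, y) + M0))//.
  rewrite (RintegralD measurableT (intg x) (icst x)).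
  by rewrite Rintegral_cst// prob_kernel /= mulr1 addrK.
have -> : Qfun P Rew gamma V s = (fun a =>
    fine (\int[P (s, a)]_(y in setT) (g ((s, a), y) + M0)%:E)%E - M0).
  by apply/funext => a; exact: (Me (s, a)).
apply: measurable_funB => //.
apply: measurableT_comp => //.
have mF := @measurable_fun_integral_finite_kernel _ _ (S * R)%type S R
  (fun xy => (g xy + M0)%:E) P.
apply: (measurableT_comp (mF _ _)).
- move=> z; rewrite lee_fin; move: (hg z); rewrite ler_norml; lra.
- by apply/measurable_EFinP; apply: measurable_funD.
exact: pair1_measurable.
Qed.



Definition BM {R : realType} (A : set R) (g : R -> R) :=
  measurable_fun A g /\ exists M, forall a, A a -> `|g a| <= M.

Lemma BM_cst {R : realType} (A : set R) (c : R) : BM A (fun=> c).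
Proof. by split => //; exists `|c|. Qed.

Lemma BM_add {R : realType} (A : set R) f g :
  BM A f -> BM A g -> BM A (fun a => f a + g a).
Proof.
move=> [mf [M1 h1]] [mg [M2 h2]]; split; first exact: measurable_funD.
exists (M1 + M2) => a Aa; apply: (le_trans (ler_normD _ _)).
by apply: lerD; [exact: h1|exact: h2].
Qed.

Lemma BM_mul {R : realType} (A : set R) f g :
  BM A f -> BM A g -> BM A (fun a => f a * g a).
Proof.
move=> [mf [M1 h1]] [mg [M2 h2]]; split; first exact: measurable_funM.
exists (M1 * M2) => a Aa; rewrite normrM.
by apply: ler_pM => //; [exact: h1|exact: h2].
Qed.

Lemma BM_opp {R : realType} (A : set R) f :
  BM A f -> BM A (fun a => - f a).
Proof.
move=> [mf [M1 h1]]; split; first exact: measurable_funN.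
by exists M1 => a Aa; rewrite normrN; exact: h1.
Qed.

Lemma BM_sub {R : realType} (A : set R) f g :
  BM A f -> BM A g -> BM A (fun a => f a - g a).
Proof. by move=> hf hg; apply: BM_add => //; exact: BM_opp. Qed.

Lemma BM_sq {R : realType} (A : set R) f :
  BM A f -> BM A (fun a => f a ^+ 2).
Proof. by move=> hf; under eq_fun do rewrite expr2; exact: BM_mul. Qed.

Ltac bm := repeat first
  [ assumption
  | apply: BM_cst
  | apply: BM_add
  | apply: BM_sub
  | apply: BM_mul
  | apply: BM_opp
  | apply: BM_sq ].

Definition Lp {R : realType} (A : set R) (p g : R -> R) : R :=
  \int[@lebesgue_measure R]_(a in A) (g a * p a).

Lemma dens_int {R : realType} (A : set R) C p : measurable A ->
  density_on A C p ->
  (@lebesgue_measure R).-integrable A (EFin \o p).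
Proof.
move=> mA [mp hp ip]; apply/integrableP; split; first exact/measurable_EFinP.
under eq_integral => a /[!inE] Aa do rewrite /= ger0_norm ?(andP (hp a Aa)).1//.
by rewrite ip ltry.
Qed.

Lemma Lp_int {R : realType} (A : set R) C p g : measurable A ->
  density_on A C p -> BM A g ->
  (@lebesgue_measure R).-integrable A (EFin \o (fun a => g a * p a)).
Proof.
move=> mA dp [mg [M hg]].
have := integrableMr (mu := @lebesgue_measure R) mA mg (bnd_of hg) (dens_int mA dp).
move=> H; apply: (eq_integrable (mu := @lebesgue_measure R) mA _ _ _ H) => a _ /=; by rewrite EFinM.
Qed.

Lemma LpD {R : realType} (A : set R) C p f g : measurable A ->
  density_on A C p -> BM A f -> BM A g ->
  Lp A p (fun a => f a + g a) = Lp A p f + Lp A p g.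
Proof.
move=> mA dp bf bg; rewrite /Lp -(RintegralD (mu := @lebesgue_measure R) mA (Lp_int mA dp bf) (Lp_int mA dp bg)).
by apply: eq_Rintegral => a _; rewrite mulrDl.
Qed.

Lemma LpZ {R : realType} (A : set R) C p k f : measurable A ->
  density_on A C p -> BM A f ->
  Lp A p (fun a => k * f a) = k * Lp A p f.
Proof.
move=> mA dp bf; rewrite /Lp -(RintegralZl (mu := @lebesgue_measure R) _ mA (Lp_int mA dp bf)).
by apply: eq_Rintegral => a _; rewrite mulrA.
Qed.

Lemma Lp1 {R : realType} (A : set R) C p : measurable A ->
  density_on A C p -> Lp A p (fun=> 1) = 1.
Proof.
move=> mA dp; rewrite /Lp.
have -> : (fun a => 1 * p a) = p by apply/funext => a; rewrite mul1r.
by rewrite /Rintegral; case: dp => _ _ ->.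
Qed.

Lemma Lp_le {R : realType} (A : set R) C p f g : measurable A ->
  density_on A C p -> BM A f -> BM A g -> (forall a, A a -> f a <= g a) ->
  Lp A p f <= Lp A p g.
Proof.
move=> mA dp bf bg fg; apply: (le_Rintegral (mu := @lebesgue_measure R) mA (Lp_int mA dp bf) (Lp_int mA dp bg)).
move=> a Aa; apply: ler_wpM2r; last exact: fg.
by case: dp => _ /(_ a Aa) /andP[].
Qed.

Lemma Lp_ge0 {R : realType} (A : set R) C p f :
  density_on A C p -> (forall a, A a -> 0 <= f a) -> 0 <= Lp A p f.
Proof.
move=> dp f0; apply: Rintegral_ge0 => a Aa; apply: mulr_ge0; first exact: f0.
by case: dp => _ /(_ a Aa) /andP[].
Qed.

Lemma Rint0_ae {R : realType} (A : set R) (f : R -> R) : measurable A ->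
  (@lebesgue_measure R).-integrable A (EFin \o f) ->
  (forall a, A a -> 0 <= f a) -> \int[@lebesgue_measure R]_(a in A) f a = 0 ->
  {ae @lebesgue_measure R, forall a, A a -> f a = 0}.
Proof.
move=> mA fi f0 If.
have mf : measurable_fun A (EFin \o f) := measurable_int _ fi.
have I0 : (\int[@lebesgue_measure R]_(x in A) `|(EFin \o f) x|)%E = 0%E.
  under eq_integral => a /[!inE] Aa do rewrite /= ger0_norm ?f0//.
  rewrite -[LHS]fineK; last by first [exact: (integrable_fin_num fi) | exact: (integrable_fin_num (mu:=@lebesgue_measure R) mA fi)].
  by rewrite -[fine _]/(\int[@lebesgue_measure R]_(a in A) f a) If.
have H := (ae_eq_integral_abs (@lebesgue_measure R) mA mf).1 I0.
apply: filterS H => a h Aa; have := h Aa; by case.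
Qed.



Definition Jf {R : realType} (A : set R) (Q : R -> R) (mu : R) (q : R -> R) : R :=
  \int[@lebesgue_measure R]_(a in A) (Q a * q a + mu * (q a - q a ^+ 2)).

Lemma Lp_ext {R : realType} (A : set R) p f g :
  (forall a, A a -> f a = g a) -> Lp A p f = Lp A p g.
Proof.
by move=> fg; apply: eq_Rintegral => a /[!inE] Aa; rewrite fg.
Qed.

Lemma LpB {R : realType} (A : set R) C p f g : measurable A ->
  density_on A C p -> BM A f -> BM A g ->
  Lp A p f - Lp A p g = Lp A p (fun a => f a - g a).
Proof.
move=> mA dp bf bg.
rewrite (@Lp_ext R A p (fun a => f a - g a) (fun a => f a + (-1) * g a)); last by move=> a _; ring.
rewrite (LpD mA dp bf (BM_mul (BM_cst A (-1)) bg)).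
by rewrite (LpZ _ mA dp bg); ring.
Qed.

Lemma Lp_E {R : realType} (A : set R) C p g : measurable A ->
  density_on A C p -> BM A g ->
  (\int[@lebesgue_measure R]_(a in A) (g a * p a)%:E)%E = (Lp A p g)%:E.
Proof.
move=> mA dp bg; rewrite /Lp /Rintegral fineK//.
have := Lp_int mA dp bg.
by first [exact: integrable_fin_num | move=> H; exact: (integrable_fin_num (mu:=@lebesgue_measure R) mA H)].
Qed.

Lemma BM_dens {R : realType} (A : set R) C p : density_on A C p -> BM A p.
Proof.
case=> mp hp _; split => //; exists `|C| => a Aa.
have /andP[p0 pC] := hp a Aa; rewrite ger0_norm//.
exact: (le_trans pC (ler_norm _)).
Qed.

Lemma aeS {R : realType} (P Q : R -> Prop) :
  (forall x, P x -> Q x) ->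
  {ae @lebesgue_measure R, forall x, P x} -> {ae @lebesgue_measure R, forall x, Q x}.
Proof.
move=> PQ [N [mN N0 sub]]; exists N; split => // x /= nQ; apply: sub => /= Px.
by apply: nQ; exact: PQ.
Qed.

Lemma aeS2 {R : realType} (P1 P2 Q : R -> Prop) :
  (forall x, P1 x -> P2 x -> Q x) ->
  {ae @lebesgue_measure R, forall x, P1 x} ->
  {ae @lebesgue_measure R, forall x, P2 x} ->
  {ae @lebesgue_measure R, forall x, Q x}.
Proof.
move=> PQ H1 H2; have := negligibleU H1 H2.
apply: negligibleS => x /= nQ.
have [P1x|nP1] := pselect (P1 x); last by left.
have [P2x|nP2] := pselect (P2 x); last by right.
by exfalso; apply: nQ; exact: PQ.
Qed.

Lemma kkt (R : realType) (A : set R) (C mu : R) (Q p : R -> R) :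
  measurable A -> BM A Q -> 0 < mu -> density_on A C p ->
  (forall q, density_on A C q -> Jf A Q mu q <= Jf A Q mu p) ->
  exists m, {ae @lebesgue_measure R, forall a, A a ->
     p a * (C - p a) * (Q a - 2 * mu * p a - m) ^+ 2 = 0}.
Proof.
move=> mA bQ mu0 dp opt.
have bp := BM_dens dp.
have hp : forall a, A a -> 0 <= p a <= C by case: dp.
have bCp : BM A (fun a => C - p a) by bm.
pose Lw := Lp A p (fun a => C - p a).
have [Lw0|Lw0] := eqVneq Lw 0.
  exists 0.
  have f0 : forall a, A a -> 0 <= (C - p a) * p a.
    by move=> a Aa; have /andP[p0 pC] := hp a Aa; apply: mulr_ge0 => //; rewrite subr_ge0.
  have H := Rint0_ae mA (Lp_int mA dp bCp) f0 Lw0.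
  apply: aeS H => a H Aa; have := H Aa => /= e.
  by rewrite [p a * _]mulrC e mul0r.
pose h a := Q a - 2 * mu * p a.
pose m := Lp A p (fun a => (C - p a) * h a) / Lw.
exists m.
pose psi a := (C - p a) * (h a - m).
have bh : BM A h by rewrite /h; bm.
have bpsi : BM A psi by rewrite /psi; bm.
have bD : BM A (fun a => (C - p a) * (h a - m) ^+ 2) by bm.
pose D := Lp A p (fun a => (C - p a) * (h a - m) ^+ 2).
have fD0 : forall a, A a -> 0 <= (C - p a) * (h a - m) ^+ 2.
  by move=> a Aa; have /andP[p0 pC] := hp a Aa; apply: mulr_ge0; rewrite ?subr_ge0 ?sqr_ge0.
have D0 : 0 <= D by apply: Lp_ge0 dp _.
suff DE : D = 0.
  have fD0' : forall a, A a -> 0 <= (C - p a) * (h a - m) ^+ 2 * p a.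
    by move=> a Aa; have /andP[p0 pC] := hp a Aa; apply: mulr_ge0 => //; exact: fD0.
  have H := Rint0_ae mA (Lp_int mA dp bD) fD0' DE.
  apply: aeS H => a H Aa; have := H Aa => /= e.
  by rewrite -[RHS]e /h; ring.
apply/eqP; rewrite eq_le D0 andbT.
have Lpsi : Lp A p psi = 0.
  rewrite (@Lp_ext R A p psi (fun a => (C - p a) * h a + (- m) * (C - p a))); last first.
    by move=> a _; rewrite /psi; ring.
  rewrite (LpD mA dp (_ : BM A (fun a => (C - p a) * h a)) (BM_mul (BM_cst A (- m)) bCp)); last by bm.
  rewrite (LpZ _ mA dp bCp) -/Lw /m mulNr divfK//; ring.
have [_ [B1 hB1]] := bpsi.
have bph : BM A (fun a => p a * (h a - m)) by bm.
have [_ [B2 hB2]] := bph.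
pose B := `|B1| + `|B2| + 1.
pose c2 := C ^+ 2.
have B0 : 0 < B by rewrite /B; have := normr_ge0 B1; have := normr_ge0 B2; lra.
have c20 : 0 <= c2 by rewrite /c2 sqr_ge0.
have muc2 : 0 <= mu * c2 by apply: mulr_ge0 => //; exact: ltW.
pose X := B + mu * c2 + 1.
have X0 : 0 < X by rewrite /X; lra.
pose t := X^-1.
have t0 : 0 < t by rewrite /t invr_gt0.
have tX : t * X = 1 by rewrite /t mulVf// gt_eqF.
have tB : t * B <= 1.
  have : t * (mu * c2 + 1) >= 0 by apply: mulr_ge0; [exact: ltW| lra].
  move: tX; rewrite /X; nra.
have tmc : t * (mu * c2) < 1.
  have : t * (B + 1) > 0 by apply: mulr_gt0 => //; lra.
  move: tX; rewrite /X; nra.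
pose q a := p a * (1 + t * psi a).
have bq : BM A q by rewrite /q; bm.
have dq : density_on A C q.
  split; first by case: bq.
  - move=> a Aa; have /andP[p0 pC] := hp a Aa.
    have u1 := hB1 a Aa; have u2 := hB2 a Aa.
    have uB : `|psi a| <= B by rewrite /B; have := ler_norm B1; have := normr_ge0 B2; lra.
    have vB : `|p a * (h a - m)| <= B by rewrite /B; have := ler_norm B2; have := normr_ge0 B1; lra.
    move: uB vB; rewrite !ler_norml => /andP[u3 u4] /andP[v3 v4].
    have e1 : 0 <= 1 + t * psi a.
      have : 0 <= t * (psi a + B) by apply: mulr_ge0; [exact: ltW|lra].
      nra.
    have e2 : 0 <= 1 - t * (p a * (h a - m)).
      have : 0 <= t * (B - p a * (h a - m)) by apply: mulr_ge0; [exact: ltW|lra].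
      nra.
    apply/andP; split; first by rewrite /q; apply: mulr_ge0.
    have -> : q a = C - (C - p a) * (1 - t * (p a * (h a - m))) by rewrite /q /psi; ring.
    rewrite lerBlDr lerDl; apply: mulr_ge0 => //; lra.
  - under eq_integral do rewrite /q mulrC.
    rewrite (Lp_E mA dp (_ : BM A (fun a => 1 + t * psi a))); last by bm.
    rewrite (LpD mA dp (BM_cst A 1) (BM_mul (BM_cst A t) bpsi)).
    by rewrite (LpZ _ mA dp bpsi) Lpsi (Lp1 mA dp) mulr0 addr0.
have Jq := opt _ dq.
pose Gq a := (1 + t * psi a) * (Q a + mu) - mu * p a * (1 + t * psi a) ^+ 2.
pose Gp a := (Q a + mu) - mu * p a.
have EJq : Jf A Q mu q = Lp A p Gq.
  by rewrite /Jf /Lp; apply: eq_Rintegral => a _; rewrite /q /Gq; ring.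
have EJp : Jf A Q mu p = Lp A p Gp.
  by rewrite /Jf /Lp; apply: eq_Rintegral => a _; rewrite /Gp; ring.
have bGq : BM A Gq by rewrite /Gq; bm.
have bGp : BM A Gp by rewrite /Gp; bm.
have bpp : BM A (fun a => psi a * (h a + mu)) by bm.
have bp2 : BM A (fun a => p a * psi a ^+ 2) by bm.
have E1 : Lp A p (fun a => psi a * (h a + mu)) = D.
  rewrite (@Lp_ext R A p _ (fun a => (C - p a) * (h a - m) ^+ 2 + (m + mu) * psi a)); last first.
    by move=> a _; rewrite /psi; ring.
  rewrite (LpD mA dp bD (BM_mul (BM_cst A (m + mu)) bpsi)) (LpZ _ mA dp bpsi) Lpsi -/D.
  by rewrite mulr0 addr0.
have E2 : Lp A p (fun a => p a * psi a ^+ 2) <= c2 * D.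
  rewrite /D -(LpZ _ mA dp bD); apply: (Lp_le mA dp bp2 (BM_mul (BM_cst A c2) bD)).
  move=> a Aa; have /andP[p0 pC] := hp a Aa.
  have k1 : p a * (C - p a) <= c2 by rewrite /c2 expr2; nra.
  have -> : p a * psi a ^+ 2 = p a * (C - p a) * ((C - p a) * (h a - m) ^+ 2).
    by rewrite /psi; ring.
  by apply: ler_wpM2r => //; exact: fD0.
move: Jq; rewrite EJq EJp -subr_le0 (LpB mA dp bGq bGp).
rewrite (@Lp_ext R A p _ (fun a => t * (psi a * (h a + mu)) +
   (- (mu * t ^+ 2)) * (p a * psi a ^+ 2))); last first.
  by move=> a _; rewrite /Gq /Gp /h; ring.
rewrite (LpD mA dp (BM_mul (BM_cst A t) bpp) (BM_mul (BM_cst A _) bp2)).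
rewrite (LpZ _ mA dp bpp) (LpZ _ mA dp bp2) E1.
set Y := Lp A p _ => HY.
have mt2 : 0 <= mu * t ^+ 2 by apply: mulr_ge0; [exact: ltW|exact: sqr_ge0].
have h1 : mu * t ^+ 2 * Y <= mu * t ^+ 2 * (c2 * D) by exact: ler_wpM2l.
have h2 : t * D <= t * (t * (mu * c2)) * D.
  move: HY h1; rewrite expr2; lra.
have h3 : t * (1 - t * (mu * c2)) * D <= 0.
  rewrite (_ : t * (1 - t * (mu * c2)) * D = t * D - t * (t * (mu * c2)) * D); last by ring.
  lra.
have tk : 0 < t * (1 - t * (mu * c2)) by apply: mulr_gt0 => //; lra.
by rewrite pmulr_rle0 in h3.
Qed.




Lemma Rint_ae {R : realType} (D : set R) (f g : R -> R) : measurable D ->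
  measurable_fun D f -> measurable_fun D g ->
  {ae @lebesgue_measure R, forall a, D a -> f a = g a} ->
  \int[@lebesgue_measure R]_(a in D) f a = \int[@lebesgue_measure R]_(a in D) g a.
Proof.
move=> mD mf mg H; rewrite /Rintegral; congr fine.
apply: (ae_eq_integral (mu := @lebesgue_measure R)) => //.
- exact/measurable_EFinP.
- exact/measurable_EFinP.
- by apply: aeS H => a h Da; rewrite /= h.
Qed.

Lemma BM_int {R : realType} (W : set R) (f : R -> R) : measurable W ->
  (@lebesgue_measure R W < +oo)%E -> BM W f ->
  (@lebesgue_measure R).-integrable W (EFin \o f).
Proof.
move=> mW Wfin [mf [M hf]].
exact: (measurable_bounded_integrable (mu := @lebesgue_measure R) mW Wfin mf (bnd_of hf)).
Qed.

Lemma Rint_lin {R : realType} (W : set R) (f g : R -> R) (x y z : R) : measurable W ->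
  (@lebesgue_measure R W < +oo)%E -> BM W f -> BM W g ->
  \int[@lebesgue_measure R]_(a in W) (x * f a + y * g a + z) =
  x * \int[@lebesgue_measure R]_(a in W) f a + y * \int[@lebesgue_measure R]_(a in W) g a
  + z * fine (@lebesgue_measure R W).
Proof.
move=> mW Wfin bf bg.
rewrite (RintegralD (mu := @lebesgue_measure R) mW); last 2 first.
- by apply: BM_int => //; bm.
- by apply: BM_int => //; bm.
rewrite (RintegralD (mu := @lebesgue_measure R) mW); last 2 first.
- by apply: BM_int => //; bm.
- by apply: BM_int => //; bm.
rewrite (RintegralZl (mu := @lebesgue_measure R) _ mW (BM_int mW Wfin bf)).
rewrite (RintegralZl (mu := @lebesgue_measure R) _ mW (BM_int mW Wfin bg)).
by rewrite Rintegral_cst.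
Qed.

Lemma final_comp (R : realType) (A : set R) (C mu m : R) (Q p : R -> R) :
  measurable A -> BM A Q -> 0 < mu -> density_on A C p ->
  {ae @lebesgue_measure R, forall a, A a ->
     p a * (C - p a) * (Q a - 2 * mu * p a - m) ^+ 2 = 0} ->
  @lebesgue_measure R [set a | A a /\ p a = C] = 0%E ->
  (@lebesgue_measure R [set a | A a /\ (0 < p a < C)%R] < +oo)%E ->
  Jf A Q mu p = mu - (4 * mu)^-1 *
      ((\int[@lebesgue_measure R]_(a in [set a | A a /\ 0 < p a < C]) Q a - 2 * mu) ^+ 2
         / fine (@lebesgue_measure R [set a | A a /\ 0 < p a < C])
       - \int[@lebesgue_measure R]_(a in [set a | A a /\ 0 < p a < C]) (Q a ^+ 2)).
Proof.
move=> mA bQ mu0 dp AEk N0 Wfin.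
set W := [set a | A a /\ 0 < p a < C].
have bp := BM_dens dp.
have hp : forall a, A a -> 0 <= p a <= C by case: dp.
have [mp _ _] := dp.
have mW : measurable W.
  have -> : W = A `&` p @^-1` `]0, C[ by apply/seteqP; split => x /=; rewrite in_itv.
  exact: mp.
have mN : measurable [set a | A a /\ p a = C].
  have -> : [set a | A a /\ p a = C] = A `&` p @^-1` [set C] by [].
  exact: mp.
have WA : W `<=` A by move=> x [].
have AEN : {ae @lebesgue_measure R, forall a, ~ (A a /\ p a = C)}.
  exists [set a | A a /\ p a = C]; split; [exact: mN|exact: N0|].
  by move=> x /= H; apply: contrapT.
have AE0 : {ae @lebesgue_measure R, forall a, (A `\` W) a -> p a = 0}.
  apply: aeS AEN => a nC [Aa nW]; have /andP[p0 pC] := hp a Aa.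
  have [->//|pn0] := eqVneq (p a) 0.
  exfalso; have [pC'|pC'] := eqVneq (p a) C; first by apply: nC.
  by apply: nW; split => //; rewrite lt_neqAle eq_sym pn0 p0 lt_neqAle pC' pC.
have split_ g : BM A g -> Lp A p g = \int[@lebesgue_measure R]_(a in W) (g a * p a).
  move=> bg; rewrite /Lp -(setDUK WA).
  rewrite (Rintegral_setU (mu := @lebesgue_measure R) mW); last 3 first.
  - exact: measurableD.
  - by rewrite (setDUK WA); exact: Lp_int mA dp bg.
  - by apply/disj_set2P; rewrite setDIK.
  have mgp : measurable_fun A (fun a => g a * p a) by case: (BM_mul bg bp).
  rewrite (@Rint_ae R (A `\` W) _ (fun=> 0)); last 4 first.
  - exact: measurableD.
  - by apply: measurable_funS mgp => //; exact: subDsetl.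
  - done.
  - by apply: aeS AE0 => a h Da; rewrite (h Da) mulr0.
  by rewrite Rintegral_cst ?mul0r ?addr0//; exact: measurableD.
have bQW : BM W Q by case: bQ => mQ [M hM]; split; [exact: measurable_funS mQ|exists M => a /WA; exact: hM].
have bQ2W : BM W (fun a => Q a ^+ 2) by bm.
have mu0' : mu != 0 by rewrite gt_eqF.
have ekkt : {ae @lebesgue_measure R, forall a, W a -> p a = (Q a - m) / (2 * mu)}.
  apply: aeS AEk => a H [Aa /andP[p0 pC]]; have := H Aa.
  have pc0 : p a * (C - p a) != 0 by rewrite mulf_neq0 ?gt_eqF// subr_gt0.
  move/eqP; rewrite mulf_eq0 (negbTE pc0) /= sqrf_eq0 => /eqP e.
  have e' : Q a - m = 2 * mu * p a.
    by apply/eqP; rewrite -subr_eq0; apply/eqP; rewrite -e; ring.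
  by rewrite e' [2 * mu * p a]mulrC mulfK// mulf_neq0.
have mWf (f : R -> R) : BM A f -> measurable_fun W f.
  by case=> mf _; exact: measurable_funS mf.
have Jp : Jf A Q mu p = Lp A p (fun a => Q a + mu - mu * p a).
  by rewrite /Jf /Lp; apply: eq_Rintegral => a _; ring.
have one : 1 = (2 * mu)^-1 * \int[@lebesgue_measure R]_(a in W) Q a + 0 * \int[@lebesgue_measure R]_(a in W) Q a
   + (- (m / (2 * mu))) * fine (@lebesgue_measure R W).
  rewrite -(Rint_lin _ _ _ mW Wfin bQW bQW).
  transitivity (Lp A p (fun=> 1)); first by rewrite (Lp1 mA dp).
  rewrite split_; last by bm.
  apply: Rint_ae => //.
  - by apply: mWf; bm.
  - by apply: mWf; bm.
  - by apply: aeS ekkt => a h Wa; rewrite (h Wa); field.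
rewrite Jp split_; last by bm.
rewrite (@Rint_ae R W _ (fun a => (4 * mu)^-1 * Q a ^+ 2 + 2^-1 * Q a + (- (m ^+ 2 / (4 * mu)) - m / 2))); last 4 first.
- exact: mW.
- by apply: mWf; bm.
- by apply: mWf; bm.
- by apply: aeS ekkt => a h Wa; rewrite (h Wa); field.
rewrite (Rint_lin _ _ _ mW Wfin bQ2W bQW).
move: one.
set IQ := \int[@lebesgue_measure R]_(a in W) Q a.
set I2 := \int[@lebesgue_measure R]_(a in W) (Q a ^+ 2).
set sg := fine (@lebesgue_measure R W).
move=> one.
have msg : m * sg = IQ - 2 * mu.
  move: one; rewrite mul0r addr0 => one.
  have -> : IQ - 2 * mu = IQ - 2 * mu * ((2 * mu)^-1 * IQ + - (m / (2 * mu)) * sg).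
    by rewrite -one mulr1.
  by field.
have -> : (IQ - 2 * mu) ^+ 2 / sg = m ^+ 2 * sg.
  rewrite -msg; have [->|sg0] := eqVneq sg 0; first by rewrite invr0 !mulr0.
  by field.
have -> : IQ = m * sg + 2 * mu by rewrite msg; ring.
by field.
Qed.


Unset Implicit Arguments. Set Strict Implicit.


Theorem corollaryS1 (d : measure_display) (S : measurableType d) (R : realType)
  (A : set R) (P : R.-pker (S * R)%type ~> S) (Rew : S -> S -> R -> R)
  (gamma mu C : R) (Vstar : S -> R) (pistar : S -> R -> R) (s : S) :
  measurable A ->
  measurable_fun setT (fun x : S * (S * R) => Rew x.1 x.2.1 x.2.2) ->
  (exists M : R, forall s' s0 a, `|Rew s' s0 a| <= M) ->
  0 <= gamma < 1 ->
  0 < mu ->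
  (* V*_mu : a bounded (measurable) fixed point of B_mu *)
  measurable_fun setT Vstar ->
  (exists M : R, forall s0, `|Vstar s0| <= M) ->
  (forall s0, Bmu P Rew gamma mu A C Vstar s0 = Vstar s0) ->
  (* pi*_mu : the maximizing policy, bounded by C *)
  PiC A C pistar ->
  (forall s0, objective P Rew gamma mu A Vstar s0 (pistar s0)
              = Bmu P Rew gamma mu A C Vstar s0) ->
  (forall a, A a -> pistar s a <= C) ->
  @lebesgue_measure R [set a | A a /\ pistar s a = C] = 0%E ->
  (@lebesgue_measure R [set a | A a /\ (0 < pistar s a < C)%R] < +oo)%E ->
  let W := [set a | A a /\ 0 < pistar s a < C] in
  let Q := Qfun P Rew gamma Vstar s in
  Bmu P Rew gamma mu A C Vstar s =
    mu - (4 * mu)^-1 *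
      ((Rintegral (@lebesgue_measure R) W Q - 2 * mu) ^+ 2
         / fine (@lebesgue_measure R W)
       - Rintegral (@lebesgue_measure R) W (fun a => Q a ^+ 2)).
Proof.
move=> mA mRew bRew hg mu0 mV bV _ piC hopt _ N0 Wfin W Q.
have [mQ [MQ hQ]] := @Q_props _ _ _ P Rew gamma Vstar s mRew bRew hg mV bV.
have bQ : BM A (Qfun P Rew gamma Vstar s).
  split; last by exists MQ.
  exact: measurable_funS mQ.
have [mpi dpi] := piC.
have dp := dpi s.
have Jbound : forall r, density_on A C r -> Jf A (Qfun P Rew gamma Vstar s) mu r <= MQ + mu.
  move=> r dr; have br := BM_dens dr.
  have hr : forall a, A a -> 0 <= r a <= C by case: dr.
  have -> : Jf A (Qfun P Rew gamma Vstar s) mu r = Lp A r (fun a => Qfun P Rew gamma Vstar s a + mu - mu * r a).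
    by rewrite /Jf /Lp; apply: eq_Rintegral => a _; ring.
  have -> : MQ + mu = Lp A r (fun a => (MQ + mu) * 1).
    by rewrite (LpZ _ mA dr (BM_cst A 1)) (Lp1 mA dr) mulr1.
  apply: (Lp_le mA dr); [bm|bm|].
  move=> a Aa; have /andP[r0 rC] := hr a Aa; have := hQ a; rewrite ler_norml => /andP[_ h2].
  have : 0 <= mu * r a by apply: mulr_ge0 => //; exact: ltW.
  lra.
have opt : forall q, density_on A C q -> Jf A (Qfun P Rew gamma Vstar s) mu q <= Jf A (Qfun P Rew gamma Vstar s) mu (pistar s).
  move=> q dq.
  have -> : Jf A (Qfun P Rew gamma Vstar s) mu (pistar s) = Bmu P Rew gamma mu A C Vstar s by exact: hopt.
  rewrite /Bmu; apply: sup_upper_bound.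
    split; first by exists (objective P Rew gamma mu A Vstar s (pistar s)); exists pistar.
    exists (MQ + mu) => x [pi [_ dpi']] <-; exact: Jbound.
  exists (fun _ => q) => //; split => //.
  case: dq => mq _ _.
  apply: (measurable_comp (F := A)) => //.
  - by move=> x [[x1 x2] [_ Ax2]] <-.
  - exact: (measurable_funS measurableT (fun _ _ => I) measurable_snd).
have [m AEk] := kkt mA bQ mu0 dp opt.
rewrite -hopt.
exact: (final_comp mA bQ mu0 dp AEk N0 Wfin).
Qed.
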